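(* For all $v,w\in\overline{C}$ we have $T(v)=T(w)$.
   Context: All graphs are simple. $\mathcal{G}^*$ denotes the class of graphs in which any two distinct odd cycles share at most one edge. Standing setting: $G\in\mathcal{G}^*$ is $2$-connected, and $C$ is a longest odd cycle of $G$ with $|C|\ge 5$. We also write $C$ for its vertex set. Let $\overline{C}=V(G)\setminus C$, assumed nonempty. For $v\in\overline{C}$ and $w\in C$, $v$ touches $w$ if there is a $v,w$-path meeting $C$ only at $w$. $T(v)=\{w\in C: v \text{ touches } w\}$. *)

(* Defs.v *)
From mathcomp Require Import all_boot.
Set Implicit Arguments. Unset Strict Implicit. Unset Printing Implicit Defensive.

Section Graphs.
Variables (V : finType) (e : rel V).

Definition simple_graph : Prop := symmetric e /\ irreflexive e.

Definition is_cycle (c : seq V) : bool :=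
  [&& 3 <= size c, uniq c & cycle e c].

Definition is_odd_cycle (c : seq V) : bool := is_cycle c && odd (size c).

Definition cycle_edges (c : seq V) : {set {set V}} :=
  [set [set x; next c x] | x in c].

(* the class G^*: two distinct odd cycles (distinct as subgraphs, i.e. with
   distinct edge sets) share at most one edge *)
Definition in_Gstar : Prop :=
  forall c1 c2 : seq V, is_odd_cycle c1 -> is_odd_cycle c2 ->
    cycle_edges c1 != cycle_edges c2 ->
    #|cycle_edges c1 :&: cycle_edges c2| <= 1.

Definition del_rel (x : V) : rel V := fun a b => [&& e a b, a != x & b != x].

Definition connected_graph : Prop := forall a b : V, connect e a b.

Definition two_connected : Prop :=
  2 < #|V| /\ connected_graph /\
  forall x a b : V, a != x -> b != x -> connect (del_rel x) a b.

Definition longest_odd_cycle (c : seq V) : Prop :=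
  is_odd_cycle c /\ forall c', is_odd_cycle c' -> size c' <= size c.

(* v touches w (w on C): there is a v,w-path (uniq vertex sequence v :: p,
   ending in w) meeting C only at w *)
Definition touches (C : seq V) (v w : V) : Prop :=
  w \in C /\
  exists p : seq V, [/\ path e v p, last v p = w, uniq (v :: p)
                      & all (fun u => u \notin C) (belast v p)].

(* T(v), as a predicate on vertices (sets of vertices = predicates) *)
Definition Tset (C : seq V) (v : V) : V -> Prop := fun w => touches C v w.

End Graphs.

(* Main.v *)
Require Import Defs.
From mathcomp Require Import all_boot.
Set Implicit Arguments. Unset Strict Implicit. Unset Printing Implicit Defensive.

Section Seqs.
Variable T : eqType.
Implicit Types (s t : seq T) (a b c x y : T).

Lemma next_mid s1 x y s2 : uniq (s1 ++ x :: y :: s2) ->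
  next (s1 ++ x :: y :: s2) x = y.
Proof.
case: s1 => [|h t]; first by rewrite /= /next /= eqxx.
move=> U; rewrite next_nth mem_cat !inE eqxx !orbT.
have xn : x \notin h :: t.
  by move: U; rewrite cat_uniq /= => /and3P[_ /norP[] ].
rewrite index_cat (negbTE xn) /= eqxx addn0.
by rewrite nth_cat ltnNge leqnSn /= subSnn.
Qed.

Lemma last_of_next b s a : uniq (b :: s) -> a \in b :: s ->
  next (b :: s) a = b -> last b s = a.
Proof.
move=> U ain nab.
have := prev_next U a; rewrite nab prev_nth mem_head => <-.
move: U => /= /andP[bs _]; by rewrite (memNindex bs) (last_nth b).
Qed.

Lemma next_cat_in x s t c : uniq (x :: s ++ t) -> c \in x :: s ->
  c != last x s -> next (x :: s ++ t) c = next (x :: s) c.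
Proof.
move=> U cin cnl.
rewrite !next_nth cin.
have -> : (c \in x :: s ++ t) by rewrite -cat_cons mem_cat cin.
rewrite -cat_cons index_cat cin /=.
have : index c (x :: s) < size (x :: s) by rewrite index_mem.
rewrite /= ltnS leq_eqVlt => /orP[/eqP E|lt].
  by move: cnl; rewrite (last_nth x) -E nth_index // eqxx.
by rewrite nth_cat lt.
Qed.

Lemma next_head x y s : next (x :: y :: s) x = y.
Proof. by rewrite /next /= eqxx. Qed.

Lemma next_mid1 x0 x y s : uniq (x0 :: x :: y :: s) -> next (x0 :: x :: y :: s) x = y.
Proof. exact: (@next_mid [:: x0]). Qed.

End Seqs.

Lemma edge_in (V : finType) (c : seq V) x : x \in c -> [set x; next c x] \in cycle_edges c.
Proof. by move=> xc; apply: (imset_f (fun x => [set x; next c x])). Qed.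

Lemma head_behead (T : eqType) (A : seq T) a I : A ++ a :: I = head a A :: behead (A ++ a :: I).
Proof. by case: A. Qed.

Section G.
Variables (V : finType) (e : rel V).
Hypothesis esy : symmetric e.

Lemma path_rev a I b : path e a (rcons I b) -> path e b (rcons (rev I) a).
Proof.
have E : (fun z => e^~ z) =2 e by move=> x y; exact: esy.
have := rev_path e a (rcons I b); rewrite last_rcons belast_rcons rev_cons (eq_path E).
by move=> ->.
Qed.

Lemma key_half (a b : V) A B I : in_Gstar e -> is_odd_cycle e (b :: A ++ a :: B) ->
  path e a (rcons I b) -> uniq I -> all (fun u => u \notin (b :: A ++ a :: B)) I ->
  I != [::] -> odd (size (b :: A ++ a :: I)) -> A = [::].
Proof.
case: A => [//|h A']; case: I => [//|i I].
set A := h :: A'; set I0 := i :: I.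
set D := b :: A ++ a :: B; set c1 := b :: A ++ a :: I0.
move=> Gs oD pI uI dI nI oc1.
move: (oD) => /andP[/and3P[_ uD cD] _].
set X := rcons (b :: A) a.
have DX : D = X ++ B by rewrite /X cat_rcons.
have c1X : c1 = X ++ I0 by rewrite /X cat_rcons.
have uX : uniq X by move: uD; rewrite DX cat_uniq => /andP[].
have XD : {subset X <= D} by move=> u; rewrite DX mem_cat => ->.
have uc1 : uniq c1.
  rewrite c1X cat_uniq uX uI andbT; apply/hasPn => u uI'.
  by apply/negP => /XD; move/allP: dI => /(_ u uI') /negP.
have cc1 : cycle e c1.
  move: cD pI; rewrite /D /c1 /= !rcons_cat !cat_path /=.
  by move=> /and3P[-> -> /andP[-> _]] ->.
have oc1' : is_odd_cycle e c1.
  rewrite /is_odd_cycle /is_cycle oc1 uc1 cc1 /= andbT.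
  by rewrite /c1 /= size_cat /= addnS !ltnS.
have neq : cycle_edges c1 != cycle_edges D.
  apply/negP => /eqP E.
  have ic1 : i \in c1 by rewrite c1X mem_cat mem_head orbT.
  have := edge_in ic1; rewrite E
   => /imsetP[u uinD /setP /(_ i)].
  rewrite !inE eqxx orTb => /esym /orP[] /eqP iu.
    by move: dI => /andP[+ _]; rewrite iu uinD.
  by move: dI => /andP[+ _]; rewrite iu mem_next uinD.
have := Gs _ _ oc1' oD neq.
set y := head a A'.
have e1c : [set b; h] \in cycle_edges c1.
  have := @edge_in _ c1 b (mem_head _ _); rewrite /c1 /A cat_cons.
  by rewrite next_head.
have e1D : [set b; h] \in cycle_edges D.
  have := @edge_in _ D b (mem_head _ _); rewrite /D /A cat_cons.
  by rewrite next_head.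
have e2c : [set h; y] \in cycle_edges c1.
  have hc : h \in c1 by rewrite /c1 !inE eqxx orbT.
  have := edge_in hc; rewrite /c1 /A cat_cons head_behead.
  move: uc1; rewrite /c1 /A cat_cons head_behead => U.
  by rewrite next_mid1.
have e2D : [set h; y] \in cycle_edges D.
  have hc : h \in D by rewrite /D !inE eqxx orbT.
  have := edge_in hc; rewrite /D /A cat_cons head_behead.
  move: uD; rewrite /D /A cat_cons head_behead => U.
  by rewrite next_mid1.
have ne : [set b; h] != [set h; y].
  apply/negP => /eqP /setP /(_ b); rewrite !inE eqxx /= => /esym /orP[] /eqP bh.
    by move: uD; rewrite /D /= bh mem_head.
  move: uD; rewrite /D /= head_behead -/y -bh => /andP[].
  by rewrite !inE eqxx orbT.
have sub : [set [set b; h]; [set h; y]] \subset cycle_edges c1 :&: cycle_edges D.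
  by apply/subsetP => E; rewrite !inE => /orP[] /eqP ->; rewrite ?e1c ?e1D ?e2c ?e2D.
have := subset_leq_card sub; rewrite cards2 ne => le2 le1.
by have := leq_trans le2 le1.
Qed.

Definition ear (C : seq V) a b I := [/\ a \in C, b \in C, a != b, path e a (rcons I b)
  & [/\ uniq I, all (fun u => u \notin C) I & I != [::]]].

Lemma odd_rot n (C : seq V) : is_odd_cycle e (rot n C) = is_odd_cycle e C.
Proof. by rewrite /is_odd_cycle /is_cycle size_rot rot_uniq rot_cycle. Qed.

Lemma ear_rev C a b I : ear C a b I -> ear C b a (rev I).
Proof.
case=> aC bC ab pI [uI dI nI]; split => //; first by rewrite eq_sym.
  exact: path_rev.
by rewrite rev_uniq all_rev; split => //; case: I nI {pI uI dI} => // i I _; rewrite rev_cons; case: (rev I).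
Qed.

Lemma ear_lemma C a b I : in_Gstar e -> is_odd_cycle e C -> ear C a b I ->
  odd (size I) /\ (next C a = b \/ next C b = a).
Proof.
move=> Gs oC [aC bC ab pI [uI dI nI]].
have uC : uniq C by case/andP: oC => /and3P[].
case: (rot_to bC) => i s Ei.
have : a \in s by move: aC; rewrite -(mem_rot i) Ei inE (negbTE ab).
move=> sa; have [A [B sAB]] : exists A B, s = A ++ a :: B.
  by case/splitPr: sa => A B; exists A, B.
have Ei' := Ei; rewrite sAB in Ei'.
have oD : is_odd_cycle e (b :: A ++ a :: B) by rewrite -Ei' odd_rot.
have dID : all (fun u => u \notin (b :: A ++ a :: B)) I.
  by apply/allP => u uu; rewrite -Ei' mem_rot; move/allP: dI; apply.
have oAB : odd (size A + size B).
  move: oD => /andP[_]; rewrite /= size_cat /= addnS.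
  by rewrite /= negbK.
case oc1 : (odd (size (b :: A ++ a :: I))).
  have A0 := key_half Gs oD pI uI dID nI oc1.
  split; first by move: oc1; rewrite A0 /= negbK.
  right; rewrite -(next_rot i uC) Ei' A0; exact: next_head.
have E2 : rot (size (b :: A)) (b :: A ++ a :: B) = a :: B ++ b :: A.
  by rewrite -cat_cons rot_size_cat.
have oD2 : is_odd_cycle e (a :: B ++ b :: A) by rewrite -E2 odd_rot.
have dID2 : all (fun u => u \notin (a :: B ++ b :: A)) (rev I).
  by rewrite all_rev; apply/allP => u uu; rewrite -E2 mem_rot; move/allP: dID; apply.
have nI2 : rev I != [::] by case: I nI {pI uI dI dID oc1 dID2} => // i' I _; rewrite rev_cons; case: (rev I).
have oc2 : odd (size (a :: B ++ b :: rev I)).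
  move: oc1 oAB; rewrite /= !size_cat /= size_rev !addnS /= !oddD.
  by case: (odd (size A)); case: (odd (size B)); case: (odd (size I)).
have uI2 : uniq (rev I) by rewrite rev_uniq.
have B0 := key_half Gs oD2 (path_rev pI) uI2 dID2 nI2 oc2.
split; first by move: oc2; rewrite B0 /= size_rev negbK.
have uD : uniq (rot i C) by rewrite rot_uniq.
left; rewrite -(next_rot i uC) -(next_rot (size (b :: A)) uD) Ei' E2 B0.
exact: next_head.
Qed.

Lemma ext_cycle b s a I : uniq (b :: s) -> cycle e (b :: s) -> last b s = a ->
  path e a (rcons I b) -> uniq I -> (forall u, u \in I -> u \notin b :: s) ->
  uniq (b :: s ++ I) /\ cycle e (b :: s ++ I).
Proof.
move=> us cs las pI uI dI; split.
  rewrite -cat_cons cat_uniq us uI andbT; apply/hasPn => u uu; exact: dI.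
move: cs; rewrite /= rcons_path rcons_cat cat_path las => /andP[-> _] /=.
exact: pI.
Qed.

Lemma double_surgery C a b I c d J : uniq C -> cycle e C ->
  ear C a b I -> ear C c d J -> next C a = b -> next C c = d -> c != a ->
  (forall u, u \in I -> u \notin J) ->
  exists F, [/\ uniq F, cycle e F & size F = size C + size I + size J].
Proof.
move=> uC cC [aC bC ab pI [uI dI nI]] [cC' dC cd pJ [uJ dJ nJ]] nab ncd ca dIJ.
case: (rot_to bC) => i s Ei.
have us : uniq (b :: s) by rewrite -Ei rot_uniq.
have cs : cycle e (b :: s) by rewrite -Ei rot_cycle.
have memE u : (u \in b :: s) = (u \in C) by rewrite -Ei mem_rot.
have las : last b s = a.
  apply: last_of_next => //; first by rewrite memE.
  by rewrite -Ei (next_rot i uC).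
have [uE cE] : uniq (b :: s ++ I) /\ cycle e (b :: s ++ I).
  apply: (ext_cycle us cs las pI uI) => u uu; rewrite memE.
  by move/allP: dI; apply.
have nE : next (b :: s ++ I) c = d.
  rewrite next_cat_in //; first by rewrite -Ei (next_rot i uC).
    by rewrite memE.
  by rewrite las.
have dE : d \in b :: s ++ I by rewrite -nE mem_next -cat_cons mem_cat memE cC'.
case: (rot_to dE) => k s' Ek.
have us' : uniq (d :: s') by rewrite -Ek rot_uniq.
have cs' : cycle e (d :: s') by rewrite -Ek rot_cycle.
have memE' u : (u \in d :: s') = (u \in b :: s ++ I) by rewrite -Ek mem_rot.
have las' : last d s' = c.
  apply: last_of_next => //; first by rewrite memE' -cat_cons mem_cat memE cC'.
  by rewrite -Ek (next_rot k uE).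
have dJE : forall u, u \in J -> u \notin d :: s'.
  move=> u uJ'; rewrite memE' -cat_cons mem_cat memE negb_or.
  apply/andP; split; first by move/allP: dJ; apply.
  by apply/negP => /dIJ; rewrite uJ'.
have [uF cF] := ext_cycle us' cs' las' pJ uJ dJE.
exists (d :: s' ++ J); split => //.
  rewrite -cat_cons size_cat.
  have -> : size (d :: s') = size (b :: s ++ I) by rewrite -Ek size_rot.
  by rewrite -cat_cons size_cat -Ei size_rot.
Qed.

End G.

Section T.
Variables (V : finType) (e : rel V).
Hypothesis esy : symmetric e.
Variable C : seq V.

Definition R : rel V := fun a b => [&& e a b, a \notin C & b \notin C].

Lemma R_sym : symmetric R.
Proof. by move=> a b; rewrite /R esy; case: (a \in C); case: (b \in C); rewrite ?andbF. Qed.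

Lemma mem_belast_last (a : V) p u : uniq (a :: p) -> u \in belast a p -> u != last a p.
Proof.
rewrite lastI rcons_uniq => /andP[lb _] ub; apply/negP => /eqP E.
by move: lb; rewrite -E ub.
Qed.

Lemma in_path_C (v : V) p u : all (fun u => u \notin C) (belast v p) ->
  u \in v :: p -> u \in C -> u = last v p.
Proof.
move=> /allP bp; rewrite lastI mem_rcons inE => /orP[/eqP -> //|ub] uC.
by move: (bp u ub); rewrite uC.
Qed.

Lemma walk_touch (a : V) q : path e a q -> last a q \in C ->
  (forall u, u \in a :: q -> u \in C -> u = last a q) -> touches e C a (last a q).
Proof.
move=> P; case: (shortenP P) => p' Pp' Up' sub lC hC.
split => //; exists p'; split => //.
apply/allP => u ub; apply/negP => uC.
have ua : u \in a :: q.
  move: (mem_belast ub); rewrite !inE => /orP[-> //|up]; by rewrite sub ?orbT.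
by move: (mem_belast_last Up' ub); rewrite (hC u ua uC) eqxx.
Qed.

Lemma path_R_out (a : V) q : path R a q -> a \notin C -> forall u, u \in a :: q -> u \notin C.
Proof.
elim: q a => [|h t IH] a /=; first by move=> _ aC u; rewrite inE => /eqP ->.
move=> /andP[/and3P[_ _ hC] P] aC u; rewrite inE => /orP[/eqP -> //|].
exact: IH.
Qed.

Lemma transfer (v w x : V) : connect R w v -> w \notin C -> touches e C v x -> touches e C w x.
Proof.
move=> /connectP[q Pq ->] wC [xC [p [Pp lp up bp]]].
have Pe : path e w q by apply: sub_path Pq => a b /andP[].
have := @walk_touch w (q ++ p).
rewrite last_cat lp cat_path Pe Pp; apply => // u.
rewrite -cat_cons mem_cat => /orP[uq|up'] uC.
  by move: (path_R_out Pq wC uq); rewrite uC.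
by rewrite -lp; apply: (in_path_C bp) => //; rewrite inE up' orbT.
Qed.

Lemma prefix_to_C (p : seq V) a : path e a p -> a \notin C -> last a p \in C ->
  exists q, [/\ path e a q, last a q \in C,
    (forall u, u \in a :: q -> u \in C -> u = last a q) & {subset q <= p}].
Proof.
elim: p a => [|h t IH] a /=; first by move=> _ /negbTE ->.
move=> /andP[eah P] aC lC.
case hC : (h \in C).
  exists [:: h]; split => //=; first by rewrite eah.
    by move=> u; rewrite !inE => /orP[] /eqP -> //; rewrite (negbTE aC).
  by move=> u; rewrite inE => /eqP ->; rewrite mem_head.
have [q [Pq lq hq sq]] := IH h P (negbT hC) lC.
exists (h :: q); split => //=; first by rewrite eah.
  move=> u; rewrite inE => /orP[/eqP -> |uq]; first by rewrite (negbTE aC).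
  exact: hq.
by move=> u; rewrite inE => /orP[/eqP -> |uq]; rewrite ?mem_head // inE sq ?orbT.
Qed.

Lemma del_path (x0 a : V) p : path (del_rel e x0) a p -> forall u, u \in p -> u != x0.
Proof.
elim: p a => [//|h t IH] a /= /andP[/and3P[_ _ hx] P] u.
rewrite inE => /orP[/eqP -> //|]; exact: (IH h P u).
Qed.

Lemma second (v x0 : V) : two_connected e -> uniq C -> 2 <= size C ->
  v \notin C -> v != x0 -> exists y, y != x0 /\ touches e C v y.
Proof.
move=> [_ [_ tc]] uC sC vC vx.
have [c [cC cx]] : exists c, c \in C /\ c != x0.
  case: C uC sC => [|c0 [|c1 s]] //= /andP[]; rewrite inE negb_or => /andP[c01 _] _ _.
  case: (eqVneq c0 x0) => [E|]; last by exists c0; rewrite mem_head.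
  by exists c1; rewrite !inE eqxx orbT -E eq_sym.
have /connectP[p Pp cl] := tc x0 v c vx cx.
have Pe : path e v p by apply: sub_path Pp => a b /andP[].
have lC : last v p \in C by rewrite -cl.
have [q [Pq lq hq sq]] := prefix_to_C Pe vC lC.
exists (last v q); split; last exact: walk_touch.
have : last v q \in v :: q by rewrite mem_last.
rewrite inE => /orP[/eqP E|lqq]; first by move: vC; rewrite -E lq.
exact: (del_path Pp (sq _ lqq)).
Qed.

Lemma belast_head (h : V) t u : u \in belast h t -> h \in belast h t.
Proof. by case: t => //= *; rewrite mem_head. Qed.

Lemma belast_conn (a : V) p : path e a p -> all (fun u => u \notin C) (belast a p) ->
  forall u, u \in belast a p -> connect R a u.
Proof.
elim: p a => [//|h t IH] a /= /andP[eah P] /andP[aC bt] u.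
rewrite inE => /orP[/eqP -> //|ub].
have hC : h \notin C by move/allP: bt; apply; exact: belast_head ub.
apply: connect_trans (IH h P bt u ub).
by apply: connect1; rewrite /R eah aC hC.
Qed.

Lemma make_ear (v x y : V) : v \notin C -> touches e C v x -> touches e C v y -> x != y ->
  exists I, ear e C x y I /\ (forall u, u \in I -> connect R v u).
Proof.
move=> vC [xC [p1 [P1 L1 U1 B1]]] [yC [p2 [P2 L2 U2 B2]]] xy.
have E : (fun z => e^~ z) =2 e by move=> a b; exact: esy.
have Pr : path e x (rev (belast v p1)) by rewrite -L1 rev_path (eq_path E).
have vb : v \in belast v p1.
  by case: p1 P1 L1 {U1 B1 Pr} => [_ L|h t _ _]; [move: xC; rewrite -L (negbTE vC) | rewrite mem_head].
have lr : last x (rev (belast v p1)) = v.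
  case: p1 P1 L1 U1 B1 Pr vb => [//|h t] /= *; by rewrite rev_cons last_rcons.
case Er : (rev (belast v p1)) Pr lr => [|u1 r']; first by move: vb; rewrite -mem_rev Er.
move=> /= /andP[exu Pr'] lr.
have Pw : path e u1 (r' ++ p2) by rewrite cat_path Pr' lr.
have good : forall u, u \in u1 :: r' ++ p2 ->
  [|| u \in belast v p1, u \in belast v p2 | u == y].
  move=> u; rewrite -cat_cons mem_cat -Er mem_rev => /orP[-> //|up].
  have : u \in v :: p2 by rewrite inE up orbT.
  by rewrite lastI mem_rcons inE L2 => /orP[->|->]; rewrite ?orbT.
have lw : last u1 (r' ++ p2) = y by rewrite last_cat lr L2.
case: (shortenP Pw) lw good => p' Pp' Up' sub lp' good.
have gp : forall u, u \in u1 :: p' -> [|| u \in belast v p1, u \in belast v p2 | u == y].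
  move=> u; rewrite inE => /orP[/eqP ->|up]; first by apply: good; rewrite mem_head.
  by apply: good; rewrite inE sub ?orbT.
have gI : forall u, u \in belast u1 p' -> (u \in belast v p1) || (u \in belast v p2).
  move=> u ub; have := gp u (mem_belast ub).
  by have := mem_belast_last Up' ub; rewrite lp' => /negbTE ->; rewrite orbF.
have u1C : u1 \notin C.
  by move/allP: B1; apply; rewrite -mem_rev Er mem_head.
exists (belast u1 p'); split; last first.
  move=> u /gI /orP[] ub; [exact: belast_conn P1 B1 u ub | exact: belast_conn P2 B2 u ub].
split => //.
  by rewrite -lp' -lastI /= exu.
split.
- by move: Up'; rewrite lastI rcons_uniq => /andP[].
- apply/allP => u /gI /orP[] ub; [by move/allP: B1; apply | by move/allP: B2; apply].
- case: p' Pp' Up' sub lp' good gp gI => [|h t] //= _ _ _ E1.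
  by move: u1C; rewrite E1 yC.
Qed.

End T.

Section M.
Variables (V : finType) (e : rel V).
Hypothesis esy : symmetric e.
Variable C : seq V.

Lemma orient x y I : ear e C x y I -> next C x = y \/ next C y = x ->
  exists a b J, [/\ ear e C a b J, next C a = b, size J = size I, {subset J <= I}
    & ((a == x) && (b == y)) || ((a == y) && (b == x))].
Proof.
move=> eI [n|n].
  by exists x, y, I; split => //; rewrite !eqxx.
exists y, x, (rev I); split => //.
- exact: ear_rev.
- exact: size_rev.
- by move=> u; rewrite mem_rev.
- by rewrite !eqxx orbT.
Qed.

Lemma main_dir (v w x : V) : in_Gstar e -> two_connected e -> longest_odd_cycle e C ->
  v \notin C -> w \notin C -> touches e C v x -> touches e C w x.
Proof.
move=> Gs tc [oC lC] vC wC Tvx.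
have uC : uniq C by case/andP: oC => /and3P[].
have cC : cycle e C by case/andP: oC => /and3P[].
have s3 : 3 <= size C by case/andP: oC => /and3P[].
have s2 : 2 <= size C by apply: leq_trans s3.
case: (boolP (connect (R e C) w v)) => [conn|nconn]; first exact: transfer conn wC Tvx.
have xC : x \in C by case: Tvx.
have vx : v != x by apply/negP => /eqP E; move: vC; rewrite E xC.
have wx : w != x by apply/negP => /eqP E; move: wC; rewrite E xC.
have [y [yx Tvy]] := second tc uC s2 vC vx.
have [z [zx Twz]] := second tc uC s2 wC wx.
have zC : z \in C by case: Twz.
have wz : w != z by apply/negP => /eqP E; move: wC; rewrite E zC.
have [z' [z'z Twz']] := second tc uC s2 wC wz.
case: (eqVneq z' x) => [<- //|z'x].
have xy : x != y by rewrite eq_sym.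
have [I1 [eI1 cI1]] := make_ear esy vC Tvx Tvy xy.
have zz' : z != z' by rewrite eq_sym.
have [I2 [eI2 cI2]] := make_ear esy wC Twz Twz' zz'.
have [oI1 n1] := ear_lemma esy Gs oC eI1.
have [oI2 n2] := ear_lemma esy Gs oC eI2.
have [a [b [I [eI nab sI subI ab]]]] := orient eI1 n1.
have [c [d [J [eJ ncd sJ subJ cd]]]] := orient eI2 n2.
have ca : c != a.
  apply/negP => /eqP ca.
  have db : d = b by rewrite -ncd -nab ca.
  move: ab cd; rewrite ca db.
  case/orP => /andP[/eqP -> /eqP ->] /orP[] /andP[/eqP E1 /eqP E2].
  - by move: zx; rewrite E1 eqxx.
  - by move: z'x; rewrite E1 eqxx.
  - by move: z'x; rewrite E2 eqxx.
  - by move: zx; rewrite E2 eqxx.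
have dIJ : forall u, u \in I -> u \notin J.
  move=> u /subI uI; apply/negP => /subJ uJ.
  move: nconn; rewrite (connect_trans (cI2 u uJ)) //.
  by rewrite (sym_connect_sym (R_sym esy C)); apply: cI1.
have [F [uF cF sF]] := double_surgery uC cC eI eJ nab ncd ca dIJ.
have oF : is_odd_cycle e F.
  rewrite /is_odd_cycle /is_cycle uF cF sF !oddD sI sJ oI1 oI2.
  case/andP: oC => _ ->; rewrite /= andbT.
  by rewrite andbT -addnA (leq_trans s3) // leq_addr.
have := lC F oF; rewrite sF -addnA -{2}[size C]addn0 leq_add2l leqn0 addn_eq0.
by rewrite sI; move: oI1; case: (size I1).
Qed.

End M.

Theorem mainTheorem7 (V : finType) (e : rel V) (C : seq V) :
  simple_graph e -> in_Gstar e -> two_connected e ->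
  longest_odd_cycle e C -> 5 <= size C ->
  forall v w : V, v \notin C -> w \notin C -> forall x : V, Tset e C v x <-> Tset e C w x.
Proof.
move=> [esy _] Gs tc lC _ v w vC wC x; rewrite /Tset; split.
  exact: main_dir.
exact: main_dir.
Qed.
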